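(* Let $d\ge1$, let $Z$ be a simple $d$-cycle, and let $D\subseteq\mathrm{Supp}(Z)$. Then the graph obtained from $G_d(Z)$ by deleting the vertices corresponding to $D$ has at most $1+\tilde\beta_{d-1}(K(D))$ connected components, where $\tilde\beta_{d-1}(K(D))=\dim\tilde H_{d-1}(K(D))$.
   Context: Fix a field $\mathbb F$. A $d$-simplex is a $(d+1)$-element subset of $[n]$ oriented by increasing order $s_1<\dots<s_{d+1}$; the empty set is the $(-1)$-simplex. A $d$-chain is a formal $\mathbb F$-combination of $d$-simplices with support the set of simplices with nonzero coefficient; $\partial\sigma=\sum_i(-1)^{i-1}(\sigma\setminus\{s_i\})$, extended linearly (reduced convention). A $d$-cycle is a chain with $\partial Z=0$; it is simple if $Z\ne0$ and every $d$-cycle supported in $\mathrm{Supp}(Z)$ is a scalar multiple of $Z$. For a set $S$ of simplices, $K(S)$ is the complex of all subsets of members of $S$; $\tilde H_{d-1}(K)$ is the space of $(d-1)$-cycles supported on $K$ modulo $\{\partial B: B$ a $d$-chain supported on $K\}$. The facet graph $G_d(Z)$ has vertex set $\mathrm{Supp}(Z)$, two $d$-simplices adjacent iff they share a $(d-1)$-face. *)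

(* Defs.v *)
From HB Require Import structures.
From mathcomp Require Import all_boot all_order all_algebra.
Set Implicit Arguments. Unset Strict Implicit. Unset Printing Implicit Defensive.
Import Order.TTheory GRing.Theory Num.Theory.
Local Open Scope ring_scope.

(* Simplices on the vertex set [n] = 'I_n are finite sets of vertices; a
   k-simplex is a set of size k+1 (the empty set is the (-1)-simplex).  A k-chain is a chain
   supported on k-simplices. *)
Definition chain (F : fieldType) (n : nat) := {ffun {set 'I_n} -> F^o}.

Definition simp_chain (F : fieldType) (n : nat) (s : {set 'I_n}) : chain F n :=
  [ffun t => (t == s)%:R].

(* boundary of an oriented simplex s = {s_1 < ... < s_{k+1}}:
   sum_i (-1)^(i-1) (s \ {s_i}); the position of x in s minus one is the
   number of elements of s smaller than x. *)
Definition bd_simp (F : fieldType) (n : nat) (s : {set 'I_n}) : chain F n :=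
  \sum_(x in s) (-1) ^+ #|[set y in s | (y < x)%N]| *: simp_chain F (s :\ x).

Definition bd (F : fieldType) (n : nat) (c : chain F n) : chain F n :=
  \sum_(s : {set 'I_n}) c s *: bd_simp F s.

Lemma bd_is_linear (F : fieldType) (n : nat) : linear (@bd F n).
Proof.
move=> a u v; rewrite /bd scaler_sumr -big_split /=; apply: eq_bigr => s _.
by rewrite !ffunE scalerDl scalerA.
Qed.

HB.instance Definition _ (F : fieldType) (n : nat) :=
  GRing.isLinear.Build F (chain F n) (chain F n) *:%R (@bd F n) (@bd_is_linear F n).

Definition supp (F : fieldType) (n : nat) (c : chain F n) : {set {set 'I_n}} :=
  [set s | c s != 0].

Definition is_chain_of_dim (F : fieldType) (n : nat) (k : nat) (c : chain F n) : Prop :=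
  forall s, s \in supp c -> #|s| = k.+1.

Definition is_cycle (F : fieldType) (n : nat) (k : nat) (c : chain F n) : Prop :=
  is_chain_of_dim k c /\ bd c = 0.

Definition simple_cycle (F : fieldType) (n : nat) (d : nat) (Z : chain F n) : Prop :=
  [/\ is_cycle d Z, Z != 0 &
      forall W : chain F n, is_cycle d W -> supp W \subset supp Z ->
        exists c : F, W = c *: Z].

Definition cplx (n : nat) (S : {set {set 'I_n}}) : {set {set 'I_n}} :=
  [set t : {set 'I_n} | [exists s in S, t \subset s]].

Definition chains_on (F : fieldType) (n : nat) (K : {set {set 'I_n}}) (k : nat)
  : {vspace chain F n} :=
  <<[seq simp_chain F s | s <- enum [set s in K | #|s| == k.+1]]>>%VS.

Definition cycles_on (F : fieldType) (n : nat) (K : {set {set 'I_n}}) (k : nat)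
  : {vspace chain F n} :=
  (chains_on F K k :&: lker (linfun (@bd F n)))%VS.

Definition bounds_on (F : fieldType) (n : nat) (K : {set {set 'I_n}}) (k : nat)
  : {vspace chain F n} :=
  (linfun (@bd F n) @: chains_on F K k.+1)%VS.

(* reduced Betti number: dim of H~_k(K) = Z_k(K) / B_k(K) (B_k <= Z_k) *)
Definition rbetti (F : fieldType) (n : nat) (K : {set {set 'I_n}}) (k : nat) : nat :=
  (\dim (cycles_on F K k) - \dim (bounds_on F K k))%N.

(* facet graph: d-simplices adjacent iff they share a (d-1)-face *)
Definition facet_adj (n : nat) (d : nat) (s t : {set 'I_n}) : bool :=
  (s != t) && (#|s :&: t| == d).

Definition induced_adj (n : nat) (d : nat) (V : {set {set 'I_n}}) : rel {set 'I_n} :=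
  fun s t => [&& s \in V, t \in V & facet_adj d s t].

Definition n_components (n : nat) (d : nat) (V : {set {set 'I_n}}) : nat :=
  #|[set [set t in V | connect (induced_adj d V) s t] | s in V]|.

(* Main.v *)
Require Import Defs.
From HB Require Import structures.
From mathcomp Require Import all_boot all_order all_algebra.
From mathcomp Require Import zify.
Import GRing.Theory.

Module Helpers.
Set Implicit Arguments. Unset Strict Implicit. Unset Printing Implicit Defensive.
Local Open Scope ring_scope.

Section S.
Variables (F : fieldType) (n : nat).
Implicit Types (s t u : {set 'I_n}) (c : chain F n).

Lemma bd_simp_chain u : bd (simp_chain F u) = bd_simp F u.
Proof.
rewrite /bd (bigD1 u) //= big1 ?addr0; first by rewrite ffunE eqxx scale1r.
by move=> t /negPf tu; rewrite ffunE tu scale0r.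
Qed.

Lemma bdbd_simp s : bd (bd_simp F s) = 0.
Proof.
rewrite {1}/bd_simp linear_sum /=.
under eq_bigr => x _ do rewrite linearZ /= bd_simp_chain /bd_simp scaler_sumr.
pose f (x y : 'I_n) : chain F n := (-1) ^+ #|[set z in s | (z < x)%N]| *:
        ((-1) ^+ #|[set z in s :\ x | (z < y)%N]| *: simp_chain F (s :\ x :\ y)).
rewrite -/(\sum_(x in s) \sum_(y in s :\ x) f x y).
have split1 : forall x, \sum_(y in s :\ x) f x y =
   \sum_(y | (y \in s) && (y < x)%N) f x y + \sum_(y | (y \in s) && (x < y)%N) f x y.
  move=> x; rewrite (bigID (fun y : 'I_n => (y < x)%N)) /=; congr (_ + _); apply: eq_bigl => y.
    rewrite in_setD1; have [->|yx] := eqVneq y x; by rewrite ?ltnn ?andbF.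
  rewrite in_setD1 -leqNgt; have [->|yx] := eqVneq y x; first by rewrite ltnn !andbF.
  rewrite ltn_neqAle; have -> : (x:nat) != y by rewrite val_eqE eq_sym.
  by rewrite andbC.
rewrite (eq_bigr _ (fun x _ => split1 x)) big_split /=.
rewrite (exchange_big_dep (fun y => y \in s)) /=; last by move=> ? ? _ /andP[].
rewrite -big_split /= big1 // => x xs.
rewrite (eq_bigl (fun y => (y \in s) && (x < y)%N)); last by move=> y; rewrite xs.
rewrite -big_split /= big1 // => y /andP[ys xy].
rewrite /f.
have e1 : [set z in s :\ y | (z < x)%N] = [set z in s | (z < x)%N].
  apply/setP => z; rewrite !inE; case: (ltnP z x) => zx; rewrite ?andbF //.
  by have -> : z != y by apply/eqP => zy; move: zx; rewrite zy ltnNge ltnW.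
have e2 : [set z in s :\ x | (z < y)%N] = [set z in s | (z < y)%N] :\ x.
  by apply/setP => z; rewrite !inE; case: (z != x); rewrite //= ?andbF.
have e3 : s :\ y :\ x = s :\ x :\ y by rewrite !setDDl setUC.
have := cardsD1 x [set z in s | (z < y)%N]; rewrite inE xs xy /= add1n => e4.
rewrite e1 e2 e3 e4 !scalerA -scalerDl exprS.
by rewrite -mulrA mulN1r [X in - X + _]mulrC addNr scale0r.
Qed.

Lemma bdbd c : bd (bd c) = 0.
Proof.
rewrite {2}/bd linear_sum big1 // => s _; by rewrite linearZ /= bdbd_simp scaler0.
Qed.

Lemma bd_simp_val s t :
  bd_simp F s t = \sum_(x in s) (-1) ^+ #|[set y in s | (y < x)%N]| * (t == s :\ x)%:R.
Proof. by rewrite /bd_simp sum_ffunE; apply: eq_bigr => x _; rewrite !ffunE. Qed.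

Lemma bd_val c t : bd c t = \sum_s c s * bd_simp F s t.
Proof. by rewrite /bd sum_ffunE; apply: eq_bigr => s _; rewrite !ffunE. Qed.

Lemma bd_simp_face s t : bd_simp F s t != 0 -> exists2 x, x \in s & t = s :\ x.
Proof.
rewrite bd_simp_val => nz.
have [x xs] : exists2 x, x \in s & t == s :\ x.
  apply/exists_inP; apply: contraNT nz => /exists_inPn H.
  by rewrite big1 // => x /H /negPf ->; rewrite mulr0.
by move/eqP; exists x.
Qed.

Lemma bd_face c t : bd c t != 0 -> exists2 s, c s != 0 & bd_simp F s t != 0.
Proof.
rewrite bd_val => nz; apply/exists_inP; apply: contraNT nz => /exists_inPn H.
rewrite big1 // => s _; have := H s; rewrite unfold_in /=.
by case: (c s =P 0) => [->|_] /=; rewrite ?mul0r // negbK => /(_ isT) /eqP ->; rewrite mulr0.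
Qed.

Definition proj (S : {set {set 'I_n}}) (c : chain F n) : chain F n :=
  [ffun s => if s \in S then 0 else c s].

Lemma proj_linear S : linear (proj S).
Proof.
by move=> a u v; apply/ffunP => s; rewrite !ffunE; case: (s \in S); rewrite ?scaler0 ?addr0.
Qed.

HB.instance Definition _ S :=
  GRing.isLinear.Build F (chain F n) (chain F n) *:%R (proj S) (proj_linear S).

Lemma supp_subP c (S : {set {set 'I_n}}) : reflect (forall s, c s != 0 -> s \in S) (supp c \subset S).
Proof.
apply: (iffP subsetP) => H s; [by move=> nz; apply: H; rewrite inE | by rewrite inE; apply: H].
Qed.

Lemma in_proj_ker c (S : {set {set 'I_n}}) : (c \in lker (linfun (proj S))) = (supp c \subset S).
Proof.
rewrite memv_ker lfunE /=; apply/eqP/supp_subP => [/ffunP H s | H].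
  by move=> nz; have := H s; rewrite !ffunE; case: (s \in S) => //= /eqP; rewrite (negPf nz).
apply/ffunP => s; rewrite !ffunE; case: ifP => // sS.
by apply/eqP; apply: contraFT sS => /H ->.
Qed.

Lemma span_simp (S : {set {set 'I_n}}) c :
  (c \in <<[seq simp_chain F s | s <- enum S]>>%VS) = (supp c \subset S).
Proof.
apply/idP/idP => [cin | /supp_subP H].
  rewrite -in_proj_ker; apply: subvP cin; apply/span_subvP => _ /mapP[s sS ->].
  rewrite in_proj_ker; apply/supp_subP => t; rewrite ffunE.
  have [->|ts] := eqVneq t s; [by rewrite -mem_enum | by move/eqP].
have -> : c = \sum_(s in S) c s *: simp_chain F s.
  apply/ffunP => t; rewrite sum_ffunE.
  have [tS | tS] := boolP (t \in S).
    rewrite (bigD1 t) //= big1 ?addr0; first by rewrite !ffunE eqxx; exact: (esym (mulr1 _)).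
    by move=> s /andP[_ st]; rewrite !ffunE eq_sym (negPf st) scaler0.
  rewrite big1; last first.
    move=> s sS; rewrite !ffunE; have [ts|_] := eqVneq t s; last by rewrite scaler0.
    by move: tS; rewrite ts sS.
  by apply/eqP; apply: contraNT tS => /H.
apply: memv_suml => s sS; apply: memvZ; apply: memv_span.
by apply/mapP; exists s; rewrite ?mem_enum.
Qed.

Lemma mem_chains_on K k c :
  (c \in chains_on F K k) = (supp c \subset [set s in K | #|s| == k.+1]).
Proof. exact: span_simp. Qed.

End S.

Section M.
Variables (F : fieldType) (n d : nat) (Z : chain F n) (D : {set {set 'I_n}}).
Hypothesis simZ : simple_cycle d.+1 Z.
Hypothesis DZ : D \subset supp Z.

Let V := supp Z :\: D.
Let R := induced_adj d.+1 V.
Definition comp (s : {set 'I_n}) := [set t in V | connect R s t].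

Lemma R_sym : symmetric R.
Proof.
move=> s t; rewrite /R /induced_adj /facet_adj andbA [(_ \in V) && _]andbC -andbA.
by rewrite eq_sym setIC.
Qed.

Lemma comp_eq a s : s \in comp a -> comp s = comp a.
Proof.
rewrite inE => /andP[_ as_]; apply/setP => t; rewrite !inE.
have cs := sym_connect_sym R_sym.
congr (_ && _); apply/idP/idP => [st|at_]; first exact: connect_trans as_ st.
by apply: connect_trans at_; rewrite cs.
Qed.

Lemma comp_self s : s \in V -> s \in comp s.
Proof. by move=> sV; rewrite inE sV connect0. Qed.

Lemma ZdimP s : Z s != 0 -> #|s| = d.+2.
Proof. by case: simZ => [[dimZ _] _ _] nz; apply: dimZ; rewrite inE. Qed.

Lemma cplxD_dim t : t \in cplx D -> #|t| = d.+2 -> t \in D.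
Proof.
rewrite inE => /exists_inP[s sD ts] ct.
have sZ : Z s != 0 by have := subsetP DZ s sD; rewrite inE.
have cs := ZdimP sZ.
suff -> : t = s by [].
by apply/eqP; rewrite eqEcard ts ct cs leqnn.
Qed.


Lemma card_inter (s1 s t : {set 'I_n}) k :
  #|s1| = k.+1 -> #|s| = k.+1 -> s1 != s -> t \subset s1 -> t \subset s -> #|t| = k ->
  #|s1 :&: s| = k.
Proof.
move=> c1 c2 ne ts1 ts ct; apply/eqP; rewrite eqn_leq.
have -> : (k <= #|s1 :&: s|)%N by rewrite -ct subset_leq_card // subsetI ts1.
rewrite andbT -ltnS; have := subset_leq_card (subsetIl s1 s); rewrite c1 leq_eqVlt.
case/orP => // /eqP e; exfalso; move/negP: ne; apply.
have e1 : s1 :&: s = s1 by apply/eqP; rewrite eqEcard subsetIl e c1 leqnn.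
have e2 : s1 :&: s = s by apply/eqP; rewrite eqEcard subsetIr e c2 leqnn.
by rewrite -e1 e2.
Qed.

Definition ZC (C : {set {set 'I_n}}) : chain F n := [ffun s => if s \in C then Z s else 0].

Lemma bdZ0 : bd Z = 0.
Proof. by case: simZ => [[_ ->]]. Qed.

Lemma bdZC_supp a t : a \in V -> bd (ZC (comp a)) t != 0 -> t \in cplx D /\ #|t| = d.+1.
Proof.
move=> aV nz; have [s1 nz1 f1] := bd_face nz; have [x xs1 tE] := bd_simp_face f1.
move: nz1; rewrite ffunE; case: ifP => [s1C nz1|]; last by move=> _ /eqP.
have c1 := ZdimP nz1.
have ct : #|t| = d.+1 by move: c1; rewrite tE (cardsD1 x s1) xs1 add1n => -[].
split=> //; apply: contraT => tnD.
have ts1 : t \subset s1 by rewrite tE subD1set.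
have H : bd (Z - ZC (comp a)) t = 0.
  rewrite bd_val big1 // => s _; rewrite !ffunE.
  case: ifP => sC; first by rewrite subrr mul0r.
  rewrite subr0; have [->|nzs] := eqVneq (Z s) 0; first by rewrite mul0r.
  have [bz|nzb] := eqVneq (bd_simp F s t) 0; first by rewrite bz mulr0.
  exfalso; have [y ys tE'] := bd_simp_face nzb.
  have ts : t \subset s by rewrite tE' subD1set.
  have sD : s \notin D.
    apply: contra tnD => sD; rewrite inE; apply/exists_inP; by exists s.
  have sV : s \in V by rewrite inE sD inE nzs.
  have s1V : s1 \in V by move: s1C; rewrite inE => /andP[].
  have ne : s1 != s by apply: contraFN sC => /eqP <-.
  have Rs : R s1 s.
    by rewrite /R /induced_adj s1V sV /facet_adj ne (card_inter c1 (ZdimP nzs) ne ts1 ts ct) eqxx.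
  move: sC; rewrite inE sV /=; move: s1C; rewrite inE => /andP[_ as1].
  by rewrite (connect_trans as1 (connect1 Rs)).
move: H; rewrite linearB /= bdZ0 !ffunE sub0r => /eqP; rewrite oppr_eq0.
by rewrite (negPf nz).
Qed.

Lemma cplx_down (s t : {set 'I_n}) : s \in cplx D -> t \subset s -> t \in cplx D.
Proof.
rewrite !inE => /exists_inP[u uD su] ts; apply/exists_inP; exists u => //.
exact: subset_trans ts su.
Qed.

Lemma bdZC_cyc a : a \in V -> bd (ZC (comp a)) \in cycles_on F (cplx D) d.
Proof.
move=> aV; rewrite memv_cap memv_ker lfunE /= bdbd eqxx andbT mem_chains_on.
apply/supp_subP => t /(bdZC_supp aV) [tD ct]; by rewrite inE tD ct eqxx.
Qed.

Lemma bounds_sub : (bounds_on F (cplx D) d <= cycles_on F (cplx D) d)%VS.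
Proof.
apply/subvP => _ /memv_imgP[c cin ->]; rewrite lfunE /=.
rewrite memv_cap memv_ker lfunE /= bdbd eqxx andbT mem_chains_on.
move: cin; rewrite mem_chains_on => /supp_subP H.
apply/supp_subP => t /bd_face [s /H] ; rewrite inE => /andP[sK /eqP cs] /bd_simp_face [x xs ->].
rewrite inE (cplx_down sK (subD1set s x)) /=.
by move: cs; rewrite (cardsD1 x s) xs add1n => -[->].
Qed.

Let P := [set comp s | s in V].
Let L := [seq ZC C | C <- enum P].

Lemma P_comp C : C \in P -> exists2 a, a \in V & C = comp a.
Proof. by case/imsetP => a aV ->; exists a. Qed.

Lemma ZV a : a \in V -> Z a != 0.
Proof. by rewrite !inE => /andP[]. Qed.

Lemma L_free : free L.
Proof.
have : free (in_tuple L); last by [].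
apply/freeP => k H i.
have iP : (i < size (enum P))%N by rewrite -(size_map ZC); exact: ltn_ord.
have [a aV Ci] : exists2 a, a \in V & nth set0 (enum P) i = comp a.
  by apply: P_comp; rewrite -mem_enum mem_nth.
have aC : a \in nth set0 (enum P) i by rewrite Ci comp_self.
move/ffunP: H => /(_ a); rewrite sum_ffunE (bigD1 i) //= big1 => [|j ji].
  rewrite !ffunE addr0 /= (nth_map set0) // !ffunE aC => /eqP.
  by rewrite mulf_eq0 (negPf (ZV aV)) orbF => /eqP.
have jP : (j < size (enum P))%N by rewrite -(size_map ZC); exact: ltn_ord.
rewrite !ffunE /= (nth_map set0) // !ffunE; case: ifP => aCj; last by rewrite scaler0.
exfalso; move/negP: ji; apply.
have [b bV Cj] : exists2 b, b \in V & nth set0 (enum P) j = comp b.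
  by apply: P_comp; rewrite -mem_enum mem_nth.
move: aCj; rewrite Cj => /comp_eq ab.
by rewrite -val_eqE /= -(nth_uniq set0 jP iP (enum_uniq _)) Cj -ab -Ci.
Qed.

Lemma dimX : \dim <<L>>%VS = #|P|.
Proof. by have := L_free; rewrite /free => /eqP ->; rewrite size_map cardE. Qed.

Lemma X_supp w : w \in <<L>>%VS -> supp w \subset V.
Proof.
rewrite -in_proj_ker; move: w; apply/subvP/span_subvP => _ /mapP[C CP ->].
rewrite in_proj_ker; apply/supp_subP => s; rewrite ffunE; case: ifP => sC nz; last by case/eqP: nz.
have [a aV CE] : exists2 a, a \in V & C = comp a by apply: P_comp; rewrite -mem_enum.
by move: sC; rewrite CE inE => /andP[].
Qed.

Lemma Y_sub : (linfun (@bd F n) @: <<L>> <= cycles_on F (cplx D) d)%VS.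
Proof.
rewrite limg_span; apply/span_subvP => _ /mapP[_ /mapP[C CP ->] ->]; rewrite lfunE /=.
have [a aV ->] : exists2 a, a \in V & C = comp a by apply: P_comp; rewrite -mem_enum.
exact: bdZC_cyc.
Qed.

Definition ZVc : chain F n := [ffun s => if s \in D then 0 else Z s].

Lemma Xp_sub :
  (<<L>> :&: (linfun (@bd F n) @^-1: bounds_on F (cplx D) d) <= <[ZVc]>)%VS.
Proof.
apply/subvP => w /memv_capP[wX]; rewrite -memv_preim lfunE /= => /memv_imgP[b bin].
rewrite lfunE /= => e.
have /supp_subP wV := X_supp wX.
move: bin; rewrite mem_chains_on => /supp_subP bD.
have bD' s : b s != 0 -> s \in D.
  by move=> /bD; rewrite inE => /andP[sK /eqP cs]; apply: cplxD_dim.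
have bc s : b s != 0 -> #|s| = d.+2 by move=> /bD; rewrite inE => /andP[_ /eqP].
have Wsupp s : (w - b) s != 0 -> Z s != 0.
  rewrite !ffunE; have [bz|/bD' sD] := eqVneq (b s) 0.
    by rewrite bz subr0 => /wV; rewrite !inE => /andP[].
  by have := subsetP DZ s sD; rewrite inE.
have cyc : is_cycle d.+1 (w - b).
  split; last by rewrite linearB /= e subrr.
  by move=> s; rewrite inE => /Wsupp /ZdimP.
have sub : supp (w - b) \subset supp Z by apply/supp_subP => s /Wsupp; rewrite inE.
case: simZ => [_ _ /(_ _ cyc sub) [c cE]].
apply/vlineP; exists c; apply/ffunP => s; move/ffunP: cE => /(_ s); rewrite !ffunE.
case: ifP => sD.
  have -> : w s = 0 by apply/eqP; apply: contraT => /wV; rewrite inE sD.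
  by move=> _; rewrite scaler0.
have -> : b s = 0 by apply/eqP; apply: contraFT sD => /bD'.
by rewrite subr0.
Qed.

Lemma main_ineq : (#|P| <= 1 + rbetti F (cplx D) d)%N.
Proof.
set f := linfun (@bd F n); set X := <<L>>%VS.
set B := bounds_on F (cplx D) d; set Zc := cycles_on F (cplx D) d.
set X' := (X :&: (f @^-1: B))%VS.
have h1 : (\dim (f @: X + B) <= \dim Zc)%N by apply: dimvS; rewrite subv_add Y_sub bounds_sub.
have h2 := dimv_sum_cap (f @: X) B.
have h3 : (\dim (f @: X :&: B) <= \dim (f @: X'))%N.
  apply: dimvS; apply/subvP => y /memv_capP[/memv_imgP[x xX ->] yB].
  by apply: memv_img; rewrite memv_cap xX -memv_preim.
have h4 := limg_ker_dim f X'; have h5 := limg_ker_dim f X.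
have h6 : (\dim (X :&: lker f) <= \dim (X' :&: lker f))%N.
  apply: dimvS; apply/subvP => x /memv_capP[xX xk].
  rewrite memv_cap xk andbT memv_cap xX -memv_preim.
  by move: xk; rewrite memv_ker => /eqP ->; rewrite mem0v.
have h7 : (\dim X' <= 1)%N.
  by apply: leq_trans (dimvS Xp_sub) _; rewrite dim_vline leq_b1.
have h8 := dimX.
rewrite /rbetti -/B -/Zc; rewrite -/X in h8.
set z := \dim Zc in h1 *. set bb := \dim B in h2 *. lia.
Qed.

End M.

End Helpers.

Theorem corollary5p2 (F : fieldType) (n d : nat) (Z : chain F n)
    (D : {set {set 'I_n}}) :
  (1 <= d)%N -> simple_cycle d Z -> D \subset supp Z ->
  (n_components d (supp Z :\: D) <= 1 + rbetti F (cplx D) d.-1)%N.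
Proof.
case: d => [//|d] _ simZ DZ.
have := Helpers.main_ineq simZ DZ.
rewrite /n_components /Helpers.comp; exact.
Qed.
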